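(* For every joint distribution $F$ of buyer types $(\theta,v)$ and every $k$-step pricing scheme $p$, the expected revenue of $p$ is at most $k$ times the expected revenue of the optimal fixed-price scheme: $$\mathrm{Rev}_F(p)\le k\cdot\sup_{q}\, q\cdot\Pr_{(\theta,v)\sim F}[v\ge q].$$ Moreover, the factor $k$ is tight: for every $\delta>0$ there exist a distribution $F$ and a $k$-step pricing scheme $p$ with $\mathrm{Rev}_F(p)\ge (k-\delta)\sup_q q\Pr_F[v\ge q]$.
   Context: Model: a seller sells identical items in unlimited supply to unit-demand buyers with types $(\theta,v)$ drawn from a joint distribution $F$. Here $\theta\ge 0$ is the cost per unit time and $v$ the valuation. A pricing scheme is a non-increasing function $p:[0,\infty)\to\mathbb{R}$: spending time $t$ on the deal costs price $p(t)$. A buyer of type $(\theta,v)$ chooses $t^*(\theta)$, the smallest minimizer of $p(t)+\theta t$ over $t\ge0$, buys iff $p(t^*(\theta))+\theta t^*(\theta)\le v$, and then pays $p(t^*(\theta))$. The expected revenue is $\mathrm{Rev}_F(p)=\mathbb{E}_F[p(t^*(\theta))\,\mathbb{I}\{\theta t^*(\theta)+p(t^*(\theta))\le v\}]$. A fixed-price (posted-price) scheme is a constant $p\equiv q$, with revenue $q\Pr[v\ge q]$. A $k$-step pricing scheme is a non-increasing step function $p$ taking at most $k$ distinct price values. *)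

(* Defs.v *)
From HB Require Import structures.
From mathcomp Require Import all_boot all_order all_algebra.
From mathcomp Require Import all_classical all_reals all_analysis.
Set Implicit Arguments. Unset Strict Implicit. Unset Printing Implicit Defensive.
Import Order.TTheory GRing.Theory Num.Theory.
Local Open Scope classical_set_scope.
Local Open Scope ring_scope.

Section Pricing.
Variable R : realType.

(* a pricing scheme: non-increasing p on [0, oo) (values off [0,oo) are irrelevant) *)
Definition pricing_scheme (p : R -> R) : Prop :=
  forall s t : R, 0 <= s -> s <= t -> p t <= p s.

Definition kstep_scheme (k : nat) (p : R -> R) : Prop :=
  pricing_scheme p /\
  exists s : seq R, (size s <= k)%N /\ forall t : R, 0 <= t -> p t \in s.

Definition is_tstar (p : R -> R) (theta t : R) : Prop :=
  [/\ 0 <= t,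
      (forall u, 0 <= u -> p t + theta * t <= p u + theta * u) &
      (forall u, 0 <= u -> p u + theta * u <= p t + theta * t -> t <= u)].

(* the model presupposes that t*(theta) exists for every theta >= 0 *)
Definition tstar_exists (p : R -> R) : Prop :=
  forall theta : R, 0 <= theta -> exists t, is_tstar p theta t.

Definition tstar (p : R -> R) (theta : R) : R := xget 0 (is_tstar p theta).

Definition payment (p : R -> R) (x : R * R) : R :=
  let t := tstar p x.1 in
  if p t + x.1 * t <= x.2 then p t else 0.

Definition type_distribution (P : probability (R * R)%type R) : Prop :=
  P [set x | x.1 < 0] = 0%E.

Definition Rev (P : probability (R * R)%type R) (p : R -> R) : \bar R :=
  (\int[P]_x (payment p x)%:E)%E.

Definition opt_fixed_rev (P : probability (R * R)%type R) : \bar R :=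
  ereal_sup [set (q%:E * P [set x | (q <= x.2)%R])%E | q in [set: R]].

End Pricing.

(* Main.v *)
Require Import Defs.
From HB Require Import structures.
From mathcomp Require Import all_boot all_order all_algebra.
From mathcomp Require Import all_classical all_reals all_analysis.
Import Order.TTheory GRing.Theory Num.Theory.
From mathcomp Require Import ring lra.
Import measurable_realfun.
Local Open Scope classical_set_scope.
Local Open Scope ring_scope.

Section S.
Variable R : realType.

Lemma int_mono d (T : measurableType d) (mu : {measure set T -> \bar R})
  (f g : T -> \bar R) : (forall x, 0 <= f x)%E -> (forall x, f x <= g x)%E ->
  (\int[mu]_x f x <= \int[mu]_x g x)%E.
Proof.
move=> f0 fg; have g0 x : (0 <= g x)%E by exact: le_trans (f0 x) (fg x).
rewrite !ge0_integralTE //; apply: ereal_sup_le => _ /= [h hf <-].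
by exists h => //= x; exact: le_trans (hf x) (fg x).
Qed.

Lemma sum_ge_mem (s : seq R) (F : R -> R) q : (forall x, 0 <= F x) ->
  q \in s -> F q <= \sum_(x <- s) F x.
Proof.
move=> F0; elim: s => // a s IH; rewrite inE big_cons => /orP[/eqP->|/IH h].
  by rewrite lerDl sumr_ge0.
by rewrite (le_trans h) // lerDr.
Qed.

Lemma mA (q : R) : measurable [set x : R * R | q <= x.2].
Proof.
have -> : [set x : R * R | q <= x.2] = setT `&` (snd @^-1` `[q, +oo[%classic).
  by apply/seteqP; split => x /=; rewrite ?in_itv /= ?andbT //; case.
have := @measurable_snd _ _ R R measurableT _ (measurable_itv `[q, +oo[). apply.
Qed.

Lemma mD : measurable [set x : R * R | x.1 < 0].
Proof.
have -> : [set x : R * R | x.1 < 0] = setT `&` (fst @^-1` `]-oo, 0[%classic).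
  by apply/seteqP; split => x /=; rewrite ?in_itv /= ?andbT //; case.
have := @measurable_fst _ _ R R measurableT _ (measurable_itv `]-oo, 0[). apply.
Qed.

Lemma tstar_ge0 (p : R -> R) th : 0 <= tstar p th.
Proof. by rewrite /tstar; case: xgetP => // x _ []. Qed.


Lemma ind0 (A : set (R * R)) x : 0 <= \1_A x :> R.
Proof. by rewrite indicE; case: (x \in A). Qed.

Lemma int_c_indic (P : probability (R * R)%type R) (c : R) (A : set (R * R)) :
  0 <= c -> measurable A -> (\int[P]_x (c * \1_A x)%:E = c%:E * P A)%E.
Proof.
move=> c0 mA0; under eq_integral do rewrite EFinM.
rewrite ge0_integralZl //; try by move=> x _; rewrite lee_fin ind0.
  by rewrite integral_indic // setIT.
by apply: (measurable_EFinP _ (\1_A)).2; exact: measurable_indic.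
Qed.

Lemma sum_le_size (s : seq R) (F : R -> \bar R) (B : \bar R) :
  (0 <= B)%E -> (forall q, F q <= B)%E ->
  (\sum_(q <- s) F q <= (size s)%:R%:E * B)%E.
Proof.
move=> B0 FB; elim: s => [|a s IH]; first by rewrite big_nil mul0e.
rewrite big_cons /= -add1n natrD EFinD ge0_muleDl // ?lee_fin // mul1e.
exact: leeD.
Qed.

Lemma part1 (k : nat) (P : probability (R * R)%type R) (p : R -> R) :
  type_distribution P -> kstep_scheme k p ->
  (Rev P p <= k%:R%:E * opt_fixed_rev P)%E.
Proof.
move=> tP [_ [s [sk sp]]].
set C := \sum_(q <- s) Num.max q 0.
pose A (q : R) := [set x : R * R | q <= x.2].
pose D := [set x : R * R | x.1 < 0].
pose g x := \sum_(q <- s) (Num.max q 0 * \1_(A q) x) + C * \1_D x.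
have C0 : 0 <= C by apply: sumr_ge0 => q _; rewrite le_max lexx orbT.
have pay_le x : Num.max (payment p x) 0 <= g x.
  have g0 : 0 <= \sum_(q <- s) (Num.max q 0 * \1_(A q) x).
    by apply: sumr_ge0 => q _; rewrite mulr_ge0 // ?le_max ?lexx ?orbT.
  rewrite /payment; set t := tstar p x.1.
  have ps : p t \in s by apply: sp; exact: tstar_ge0.
  case: ifPn => buy; last first.
    by rewrite maxxx /g addr_ge0 // mulr_ge0 // ind0.
  have [th0|th0] := ltP x.1 0.
    rewrite /g /indic (_ : x \in D) ?mulr1; last by rewrite inE.
    apply: (@le_trans _ _ C); last by rewrite lerDr.
    by apply: (@sum_ge_mem s (fun q => Num.max q 0)) => // q; rewrite le_max lexx orbT.
  have Ax : x \in A (p t).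
    rewrite inE /A /=; apply: le_trans buy; rewrite lerDl mulr_ge0 //.
    exact: tstar_ge0.
  rewrite /g; apply: (@le_trans _ _ (\sum_(q <- s) (Num.max q 0 * \1_(A q) x))); last first.
    by rewrite lerDl mulr_ge0 // ind0.
  have := @sum_ge_mem s (fun q => Num.max q 0 * \1_(A q) x) (p t).
  rewrite /= /indic Ax mulr1; apply => // q.
  by rewrite mulr_ge0 // ?le_max ?lexx ?orbT //; case: (_ \in _).
have Rev_le : (Rev P p <= \int[P]_x (g x)%:E)%E.
  rewrite /Rev integralE.
  apply: (@le_trans _ _ (\int[P]_x ((fun x => (payment p x)%:E)^\+ x))%E).
    by apply: geeDl; rewrite oppe_le0; apply: integral_ge0 => x _; exact: funeneg_ge0.
  apply: (@int_mono _ _ P) => x; first exact: funepos_ge0.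
  by rewrite funeposE -EFin_max lee_fin pay_le.
have mAq q : measurable (A q) by exact: mA.
have ig : (\int[P]_x (g x)%:E = \sum_(q <- s) (Num.max q 0)%:E * P (A q))%E.
  rewrite /g; under eq_integral do rewrite EFinD -sumEFin.
  have mq (q : R) : 0 <= Num.max q 0 by rewrite le_max lexx orbT.
  rewrite ge0_integralD //; first last.
  - by apply/measurable_EFinP; apply: measurable_funM => //; exact: measurable_indic mD.
  - by move=> x _; rewrite lee_fin mulr_ge0 // ind0.
  - apply: emeasurable_sum => q; apply/measurable_EFinP.
    by apply: measurable_funM; [exact: measurable_cst | exact: measurable_indic (mAq q)].
  - move=> x _; apply: sume_ge0 => q _.
    by rewrite lee_fin mulr_ge0 // ind0.
  rewrite int_c_indic //; last exact: mD.
  rewrite tP mule0 adde0 ge0_integral_sum //.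
  - by apply: eq_bigr => q _; rewrite int_c_indic.
  - move=> q; apply/measurable_EFinP.
    by apply: measurable_funM; [exact: measurable_cst | exact: measurable_indic (mAq q)].
  - by move=> q x _; rewrite lee_fin mulr_ge0 // ind0.
have opt0 : (0 <= opt_fixed_rev P)%E.
  by apply: ereal_sup_ubound; exists 0 => //; rewrite mul0e.
apply: (le_trans Rev_le); rewrite ig.
apply: (@le_trans _ _ ((size s)%:R%:E * opt_fixed_rev P)%E).
  apply: sum_le_size => // q; have [q0|q0] := ltP 0 q.
    by apply: ereal_sup_ubound; exists q.
  by rewrite ?(max_idPr q0) mul0e.
by apply: lee_wpmul2r => //; rewrite lee_fin ler_nat.
Qed.

Definition cc (M : R) (j : nat) : R := M^-1 ^+ j.
Definition TT (M : R) (j : nat) : R := (M + 1) ^+ j - 1.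
Definition th (M : R) (j : nat) : R := cc M j / (M * (M + 1) ^+ j).
Definition vv (M : R) (j : nat) : R := (M + 1) / M * cc M j.
Definition atom (M : R) (j : nat) : R * R := (th M j, vv M j).
Definition NN (M : R) (k : nat) (u : R) : nat := \max_(j < k | TT M j <= u) (j : nat).
Definition pp (M : R) (k : nat) (u : R) : R := cc M (NN M k u).

Lemma TT_lt M i j : 1 <= M -> (i < j)%N -> TT M i < TT M j.
Proof.
move=> M1 ij; rewrite /TT ltrD2r ltr_eXn2l //.
by rewrite ltrDr (lt_le_trans ltr01).
Qed.

Lemma TT_le M i j : 1 <= M -> (TT M i <= TT M j) = (i <= j)%N.
Proof.
move=> M1; apply/idP/idP => [|ij].
  by apply: contraTT; rewrite -!ltnNge -!ltNge => /(@TT_lt M _ _ M1).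
by rewrite le_eqVlt; case: ltngtP ij => // [/(@TT_lt M _ _ M1) -> | ->]; rewrite ?orbT ?eqxx.
Qed.

Lemma TT0 M : TT M 0 = 0. Proof. by rewrite /TT expr0 subrr. Qed.

Lemma TT_ge0 M j : 1 <= M -> 0 <= TT M j.
Proof. by move=> M1; rewrite -(TT0 M) TT_le. Qed.

Lemma cc_ge0 M j : 0 < M -> 0 <= cc M j.
Proof. by move=> M0; rewrite /cc exprn_ge0 // invr_ge0 ltW. Qed.

Lemma cc_anti M i j : 1 <= M -> (i <= j)%N -> cc M j <= cc M i.
Proof.
move=> M1 ij; have M0 : 0 < M := lt_le_trans ltr01 M1.
by rewrite /cc ler_wiXn2l // ?invr_ge0 ?(ltW M0) // invf_le1.
Qed.

Lemma NN_lt M k u : (0 < k)%N -> (NN M k u < k)%N.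
Proof.
move=> k0; rewrite /NN; have : (\max_(j < k | (TT M j <= u)%R) (j : nat) <= k.-1)%N.
  by apply/bigmax_leqP => j _; rewrite -ltnS prednK.
by move=> h; apply: leq_ltn_trans h _; rewrite prednK.
Qed.

Lemma NN_mono M k s t : s <= t -> (NN M k s <= NN M k t)%N.
Proof.
move=> st; apply/bigmax_leqP => j js.
by apply: (@leq_bigmax_cond _ (fun j : 'I_k => TT M j <= t) (fun j : 'I_k => (j : nat))); exact: le_trans st.
Qed.

Lemma NN_TT M k j : 1 <= M -> (j < k)%N -> NN M k (TT M j) = j.
Proof.
move=> M1 jk; apply/eqP; rewrite eqn_leq; apply/andP; split.
  by apply/bigmax_leqP => l; rewrite TT_le.
by apply: (@leq_bigmax_cond _ (fun l : 'I_k => TT M l <= TT M j) (fun l : 'I_k => (l : nat)) (Ordinal jk)).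
Qed.

Lemma TT_NN M k u : 1 <= M -> (0 < k)%N -> 0 <= u -> TT M (NN M k u) <= u.
Proof.
move=> M1 k0 u0.
have hc : (0 < #|[pred j : 'I_k | (TT M j <= u)%R]|)%N.
  by apply/card_gt0P; exists (Ordinal k0); rewrite inE /= TT0.
have [i0 Pi0 hi] := eq_bigmax_cond (fun j : 'I_k => (j : nat)) hc.
have -> : NN M k u = i0.
  by rewrite -hi /NN; apply: eq_bigl => j; rewrite inE.
by move: Pi0; rewrite inE.
Qed.

Lemma pp_TT M k j : 1 <= M -> (j < k)%N -> pp M k (TT M j) = cc M j.
Proof. by move=> M1 jk; rewrite /pp NN_TT. Qed.

Lemma reduce M k th u : 1 <= M -> (0 < k)%N -> 0 <= th -> 0 <= u ->
  pp M k (TT M (NN M k u)) + th * TT M (NN M k u) <= pp M k u + th * u.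
Proof.
move=> M1 k0 th0 u0; rewrite pp_TT //; last exact: NN_lt.
by rewrite lerD2l ler_wpM2l // TT_NN.
Qed.

Lemma crit M k th j : 1 <= M -> (0 < k)%N -> 0 <= th -> (j < k)%N ->
  (forall l, (l < k)%N -> pp M k (TT M j) + th * TT M j <= pp M k (TT M l) + th * TT M l) ->
  (forall l, (l < k)%N -> pp M k (TT M l) + th * TT M l <= pp M k (TT M j) + th * TT M j ->
     (j <= l)%N) ->
  is_tstar (pp M k) th (TT M j).
Proof.
move=> M1 k0 th0 jk h1 h2; split; first exact: TT_ge0.
  move=> u u0; apply: le_trans (@reduce M k th u M1 k0 th0 u0).
  by apply: h1; exact: NN_lt.
move=> u u0 hu; apply: le_trans (@TT_NN M k u M1 k0 u0).
rewrite TT_le //; apply: h2; first exact: NN_lt.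
exact: le_trans (@reduce M k th u M1 k0 th0 u0) hu.
Qed.

Lemma exists_min (F : nat -> R) n :
  exists j, (j <= n)%N /\ forall l, (l <= n)%N -> F j <= F l.
Proof.
elim: n => [|n [j [jn hj]]].
  by exists 0%N; split => // l; rewrite leqn0 => /eqP->.
have [le|lt] := leP (F j) (F n.+1).
  exists j; split; first exact: leqW.
  by move=> l; rewrite leq_eqVlt ltnS => /orP[/eqP->|/hj].
exists n.+1; split => // l; rewrite leq_eqVlt ltnS => /orP[/eqP->//|/hj].
by apply: le_trans; exact: ltW.
Qed.

Lemma tstar_ex M k : 1 <= M -> (0 < k)%N -> tstar_exists (pp M k).
Proof.
move=> M1 k0 th th0.
pose F l := pp M k (TT M l) + th * TT M l.
have [j0 [j0k hj0]] := exists_min F k.-1.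
have exQ : exists l, (l < k)%N && (F l <= F j0).
  by exists j0; rewrite lexx andbT -(prednK k0) ltnS.
case: (ex_minnP exQ) => j /andP[jk Fj] jmin.
exists (TT M j); apply: crit => // l lk.
  apply: le_trans Fj _; apply: hj0; by rewrite -ltnS prednK.
by move=> Fl; apply: jmin; rewrite lk /=; exact: le_trans Fl Fj.
Qed.

Lemma cc_gt0 M j : 0 < M -> 0 < cc M j.
Proof. by move=> M0; rewrite /cc exprn_gt0 // invr_gt0. Qed.

Lemma th_ge0 M j : 0 < M -> 0 <= th M j.
Proof.
move=> M0; apply: divr_ge0; first exact: cc_ge0.
by apply: mulr_ge0; [exact: ltW | apply: exprn_ge0; rewrite addr_ge0 ?ltW].
Qed.

Lemma thTT M j : 0 < M -> th M j * TT M j = cc M j / M - th M j.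
Proof.
move=> M0; have X0 : (M + 1) ^+ j != 0 by rewrite expf_neq0 // gt_eqF // ltr_wpDr.
rewrite /th /TT; field; apply/andP; split => //; exact: lt0r_neq0.
Qed.

Lemma thTTS M j : 0 < M -> th M j * (TT M j.+1 - TT M j) = cc M j.
Proof.
move=> M0; have X0 : (M + 1) ^+ j != 0 by rewrite expf_neq0 // gt_eqF // ltr_wpDr.
rewrite /th /TT exprS; field; apply/andP; split => //; exact: lt0r_neq0.
Qed.

Lemma ccS M j : 0 < M -> M * cc M j.+1 = cc M j.
Proof. by move=> M0; rewrite /cc exprS mulrA divff ?mul1r // lt0r_neq0. Qed.

Lemma key_lt M j l : 2 <= M -> (l < j)%N -> cc M j + th M j * TT M j < cc M l.
Proof.
move=> M2 lj; have M0 : 0 < M by apply: lt_le_trans M2; rewrite ltr0n.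
have M1 : 1 <= M by apply: le_trans M2; rewrite ler1n.
rewrite thTT //; apply: (@lt_le_trans _ _ (cc M j.-1)); last first.
  by apply: cc_anti => //; rewrite -ltnS prednK // (leq_ltn_trans _ lj).
rewrite -(@ccS M j.-1) // prednK ?(leq_ltn_trans _ lj) //.
have iM : M^-1 < 1 by rewrite invf_lt1 // (lt_le_trans _ M2) // ltr1n.
set c := cc M j; set t := th M j.
have c0 : 0 < c by exact: cc_gt0.
have t0 : 0 <= t by exact: th_ge0.
have ci : c / M < c by rewrite gtr_pMr.
have cM : 2 * c <= M * c by rewrite ler_wpM2r // ltW.
lra.
Qed.

Lemma buyer M k j : 2 <= M -> (j < k)%N -> is_tstar (pp M k) (th M j) (TT M j).
Proof.
move=> M2 jk; have M0 : 0 < M by apply: lt_le_trans M2; rewrite ltr0n.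
have M1 : 1 <= M by apply: le_trans M2; rewrite ler1n.
have k0 : (0 < k)%N by apply: leq_ltn_trans jk.
have t0 := @th_ge0 M j M0.
apply: crit => // l lk; rewrite !pp_TT //.
  case: (ltngtP l j) => [lj | jl | ->] //.
    apply: le_trans (ltW (@key_lt M j l M2 lj)) _.
    by rewrite lerDl mulr_ge0 // TT_ge0.
  have e : th M j * TT M j.+1 = th M j * TT M j + cc M j.
    by rewrite -(@thTTS M j M0); ring.
  apply: (@le_trans _ _ (th M j * TT M j.+1)); first by rewrite e addrC.
  apply: (@le_trans _ _ (th M j * TT M l)); first by rewrite ler_wpM2l // TT_le.
  by rewrite lerDr cc_ge0.
move=> h; rewrite leqNgt; apply/negP => lj.
have hl : cc M l <= cc M l + th M j * TT M l by rewrite lerDl mulr_ge0 // TT_ge0.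
by have := lt_le_trans (@key_lt M j l M2 lj) hl; rewrite ltNge h.
Qed.

Lemma tstar_buyer M k j : 2 <= M -> (j < k)%N -> tstar (pp M k) (th M j) = TT M j.
Proof.
move=> M2 jk; have [T0 bmin bsmall] := @buyer M k j M2 jk.
rewrite /tstar; case: xgetP => [x _ [x0 hmin hsmall] | hn]; last first.
  by exfalso; apply: (hn (TT M j)); exact: buyer.
apply: le_anti; apply/andP; split.
  exact: hsmall (TT M j) T0 (bmin x x0).
exact: bsmall x x0 (hmin (TT M j) T0).
Qed.

Lemma pay_buyer M k j : 2 <= M -> (j < k)%N ->
  payment (pp M k) (atom M j) = cc M j.
Proof.
move=> M2 jk; have M0 : 0 < M by apply: lt_le_trans M2; rewrite ltr0n.
have M1 : 1 <= M by apply: le_trans M2; rewrite ler1n.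
rewrite /payment /= tstar_buyer // pp_TT // ifT //.
rewrite thTT // /vv.
have -> : (M + 1) / M * cc M j = cc M j + cc M j / M by field; exact: lt0r_neq0.
by rewrite lerD2l gerBl th_ge0.
Qed.

Lemma kstep_pp M k : 1 <= M -> (0 < k)%N -> kstep_scheme k (pp M k).
Proof.
move=> M1 k0; split.
  by move=> s t s0 st; apply: cc_anti => //; exact: NN_mono.
exists [seq cc M j | j <- iota 0 k]; split; first by rewrite size_map size_iota.
move=> t t0; apply: map_f; rewrite mem_iota /= add0n; exact: NN_lt.
Qed.

Lemma pay_ge0 M k x : 0 < M -> 0 <= payment (pp M k) x.
Proof. by move=> M0; rewrite /payment; case: ifP => // _; exact: cc_ge0. Qed.

Definition wt (M : R) (M0 : 0 <= M) (n : nat) : {nonneg R} := NngNum (exprn_ge0 n M0).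
Arguments wt {M}.
Definition mu (M : R) (M0 : 0 <= M) (k : nat) :=
  msum (fun n => mscale (wt M0 n) (@dirac _ (R * R)%type (atom M n) R)) k.
Arguments mu {M}.
Definition PP (M : R) (M0 : 0 <= M) (k : nat) : probability (R * R)%type R :=
  mnormalize (mu M0 k) (@dirac _ (R * R)%type (0, 0) R).
Arguments PP {M}.
Definition SS (M : R) (k : nat) : R := \sum_(n < k) M ^+ n.

Lemma muE M (M0 : 0 <= M) k U :
  mu M0 k U = (\sum_(n < k) M ^+ n * \1_U (atom M n))%:E.
Proof.
rewrite /mu /msum /= -sumEFin; apply: eq_bigr => n _.
by rewrite /mscale /= diracE indicE EFinM.
Qed.

Lemma SS_gt0 M k : 0 < M -> (0 < k)%N -> 0 < SS M k.
Proof.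
move=> M0 k0; rewrite /SS -(prednK k0) big_ord_recl expr0.
have : 0 <= \sum_(i < k.-1) M ^+ (bump 0 i).
  by apply: sumr_ge0 => i _; rewrite exprn_ge0 // ltW.
lra.
Qed.

Lemma PPE M (M0 : 0 <= M) k U : 0 < M -> (0 < k)%N ->
  PP M0 k U = ((\sum_(n < k) M ^+ n * \1_U (atom M n)) / SS M k)%:E.
Proof.
move=> M0' k0; rewrite /PP /=; rewrite /mnormalize.
have eT : mu M0 k setT = (SS M k)%:E.
  by rewrite muE /SS; congr (_%:E); apply: eq_bigr => n _; rewrite indicE in_setT mulr1.
set e := (X in if (X == 0)%E || _ then _ else _).
have -> : e = (SS M k)%:E by exact: eT.
set e2 := (X in _ || (X == +oo%E)).
have -> : e2 = (SS M k)%:E by exact: eT.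
rewrite eqe (negbTE (lt0r_neq0 (@SS_gt0 M k M0' k0))) /=.
set e3 := (X in fine X).
have -> : e3 = (SS M k)%:E by exact: eT.
set e4 := (X in (X * _)%E).
have -> : e4 = (\sum_(n < k) M ^+ n * \1_U (atom M n))%:E by exact: muE.
by rewrite -EFinM.
Qed.


Lemma atom_inj M i j : 1 < M -> atom M i = atom M j -> i = j.
Proof.
move=> M1 [_ e]; have M0 : 0 < M by apply: lt_trans M1.
have h : (M + 1) / M != 0 by rewrite mulf_neq0 // ?invr_eq0 lt0r_neq0 // addr_gt0.
move/(mulfI h): e; rewrite /cc; apply: ieexprIn; first by rewrite invr_gt0.
by rewrite invr_eq1 gt_eqF.
Qed.

Lemma m_atom M j : measurable [set atom M j].
Proof.
have -> : [set atom M j] = [set th M j] `*` [set vv M j].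
  by apply/seteqP; split => [[a b] /= [-> ->] | [a b] /= [-> ->]].
by apply: measurableX; exact: measurable_set1.
Qed.

Lemma ccM M j : 0 < M -> cc M j * M ^+ j = 1.
Proof.
by move=> M0; rewrite /cc -exprMn_comm ?mulVf ?expr1n ?lt0r_neq0 //; exact: mulrC.
Qed.

Lemma PP_atom M (M0 : 0 <= M) k j : 2 <= M -> (j < k)%N ->
  PP M0 k [set atom M j] = (M ^+ j / SS M k)%:E.
Proof.
move=> M2 jk; have M1 : 1 < M by apply: lt_le_trans M2; rewrite ltr1n.
have M0' : 0 < M by apply: lt_trans M1.
rewrite PPE //; last by apply: leq_ltn_trans jk.
congr ((_ / _)%:E); rewrite (bigD1 (Ordinal jk)) //= indicE mem_set // mulr1.
rewrite big1 ?addr0 // => n nj; rewrite indicE memNset ?mulr0 //= => h.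
by move: nj; rewrite (_ : n = Ordinal jk) ?eqxx //; apply: val_inj; exact: atom_inj h.
Qed.

Lemma typ_PP M (M0 : 0 <= M) k : 0 < M -> (0 < k)%N -> type_distribution (PP M0 k).
Proof.
move=> M0' k0; rewrite /type_distribution PPE // big1 ?mul0r // => n _.
by rewrite indicE memNset ?mulr0 //= ltNge th_ge0.
Qed.

Lemma geo (M : R) n : (M - 1) * \sum_(l < n) M ^+ l = M ^+ n - 1.
Proof.
elim: n => [|n IH]; first by rewrite big_ord0 mulr0 expr0 subrr.
by rewrite big_ord_recr /= mulrDr IH exprS; ring.
Qed.

Lemma vv_anti M i j : 1 <= M -> (i <= j)%N -> vv M j <= vv M i.
Proof.
move=> M1 ij; have M0 : 0 < M by apply: lt_le_trans M1.
by rewrite /vv ler_wpM2l ?cc_anti // divr_ge0 ?ltW // addr_gt0.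
Qed.

Lemma opt_sum M q n : 2 <= M -> 0 < q ->
  q * (\sum_(l < n) M ^+ l * \1_[set x : R * R | q <= x.2] (atom M l)) * (M - 1) <= M + 1.
Proof.
move=> M2 q0; have M1 : 1 <= M by apply: le_trans M2; rewrite ler1n.
have M0 : 0 < M by apply: lt_le_trans M1.
have M10 : 0 <= M - 1 by rewrite subr_ge0.
elim: n => [|n IH]; first by rewrite big_ord0 mulr0 mul0r addr_ge0 ?ltW.
rewrite big_ord_recr /=.
have [qv|qv] := leP q (vv M n); last first.
  rewrite indicE memNset ?mulr0 ?addr0 // => /= h; by move: qv; rewrite ltNge h.
have -> : \sum_(i < n) M ^+ i * \1_[set x : R * R | q <= x.2] (atom M i) =
    \sum_(i < n) M ^+ i.
  apply: eq_bigr => i _; rewrite indicE mem_set ?mulr1 //=.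
  by apply: le_trans qv _; apply: vv_anti => //; exact: ltnW.
rewrite indicE mem_set ?mulr1 //=.
rewrite -mulrA (mulrC _ (M - 1)) mulrDr geo.
have e : vv M n * (M * M ^+ n) = M + 1.
  rewrite /vv (_ : (M + 1) / M * cc M n * (M * M ^+ n) =
     (M + 1) * (M / M) * (cc M n * M ^+ n)); last by ring.
  by rewrite ccM // divff ?mulr1 // lt0r_neq0.
have X0 : 0 <= M ^+ n by rewrite exprn_ge0 // ltW.
set X := M ^+ n.
have h1 : q * (M * X) <= vv M n * (M * X).
  by rewrite ler_wpM2r // mulr_ge0 // ltW.
have -> : q * (X - 1 + (M - 1) * X) = q * (M * X) - q by ring.
have h2 : vv M n * (M * X) = M + 1 by exact: e.
lra.
Qed.

Lemma opt_le M (M0 : 0 <= M) k : 2 <= M -> (0 < k)%N ->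
  (opt_fixed_rev (PP M0 k) <= ((M + 1) / ((M - 1) * SS M k))%:E)%E.
Proof.
move=> M2 k0; have M1 : 1 <= M by apply: le_trans M2; rewrite ler1n.
have M0' : 0 < M by apply: lt_le_trans M1.
have D0 : 0 < M - 1 by rewrite subr_gt0 (lt_le_trans _ M2) // ltr1n.
have S0 := @SS_gt0 M k M0' k0.
have B0 : 0 <= (M + 1) / ((M - 1) * SS M k).
  by rewrite divr_ge0 // ?mulr_ge0 ?ltW // addr_gt0.
apply: ge_ereal_sup => _ [q _ <-].
have [q0|q0] := leP q 0.
  apply: (@le_trans _ _ 0%E); last by rewrite lee_fin.
  by apply: mule_le0_ge0; rewrite ?lee_fin.
rewrite PPE // -EFinM lee_fin ler_pdivlMr ?mulr_gt0 //.
have := @opt_sum M q k M2 q0.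
set Sg := \sum_(l < k) _.
have -> : q * (Sg / SS M k) * ((M - 1) * SS M k) = q * Sg * (M - 1).
  by field; exact: lt0r_neq0.
by [].
Qed.

Lemma opt_pos M (M0 : 0 <= M) k : 2 <= M -> (0 < k)%N ->
  (0 < opt_fixed_rev (PP M0 k))%E.
Proof.
move=> M2 k0; have M1 : 1 <= M by apply: le_trans M2; rewrite ler1n.
have M0' : 0 < M by apply: lt_le_trans M1.
have S0 := @SS_gt0 M k M0' k0.
have h : (0 < (vv M 0)%:E * PP M0 k [set x : R * R | (vv M 0 <= x.2)%R])%E.
  rewrite PPE // -EFinM lte_fin mulr_gt0 //.
    by rewrite /vv mulr_gt0 ?cc_gt0 // divr_gt0 // addr_gt0.
  rewrite divr_gt0 // (bigD1 (Ordinal k0)) //= indicE mem_set //= expr0 mulr1.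
  have : 0 <= \sum_(i < k | i != Ordinal k0) M ^+ i * \1_[set x : R * R | vv M 0 <= x.2] (atom M i).
    by apply: sumr_ge0 => i _; rewrite mulr_ge0 ?ind0 // exprn_ge0 // ltW.
  lra.
apply: (lt_le_trans h).
by apply: ereal_sup_ubound; exists (vv M 0).
Qed.

Lemma Rev_ge M (M0 : 0 <= M) k : 2 <= M -> (0 < k)%N ->
  ((k%:R / SS M k)%:E <= Rev (PP M0 k) (pp M k))%E.
Proof.
move=> M2 k0; have M1' : 1 < M by apply: lt_le_trans M2; rewrite ltr1n.
have M1 : 1 <= M by exact: ltW.
have M0' : 0 < M by apply: lt_le_trans M1.
pose G x := \sum_(j < k) cc M j * \1_[set atom M j] x.
have G0 x : 0 <= G x by apply: sumr_ge0 => j _; rewrite mulr_ge0 ?ind0 ?cc_ge0.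
have GP x : G x <= payment (pp M k) x.
  case: (pselect (exists j : 'I_k, x = atom M j)) => [[j ->]|nx].
    rewrite /G (bigD1 j) //= indicE mem_set // mulr1 big1 ?addr0 ?pay_buyer //.
    move=> i ij; rewrite indicE memNset ?mulr0 //= => h.
    by move: ij; rewrite (_ : i = j) ?eqxx //; apply: val_inj; apply: (@atom_inj M); rewrite // h.
  rewrite /G big1 ?pay_ge0 // => i _; rewrite indicE memNset ?mulr0 //= => h.
  by apply: nx; exists i.
have iG : (\int[PP M0 k]_x (G x)%:E = (k%:R / SS M k)%:E)%E.
  rewrite /G; under eq_integral do rewrite -sumEFin.
  rewrite ge0_integral_sum //; first last.
  - by move=> j x _; rewrite lee_fin mulr_ge0 ?ind0 ?cc_ge0.
  - move=> j; apply/measurable_EFinP.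
    by apply: measurable_funM; [exact: measurable_cst | exact: measurable_indic (m_atom M j)].
  rewrite (eq_bigr (fun _ => ((SS M k)^-1)%:E)); last first.
    move=> j _; rewrite int_c_indic ?cc_ge0 //; last exact: m_atom.
    set e := (X in (_ * X)%E).
    have -> : e = (M ^+ j / SS M k)%:E by exact: PP_atom.
    rewrite -EFinM.
    by rewrite mulrA ccM // mul1r.
  by rewrite sumEFin sumr_const card_ord mulr_natl.
rewrite -iG /Rev; apply: (@int_mono _ _ (PP M0 k)) => x; first by rewrite lee_fin.
by rewrite lee_fin.
Qed.

End S.

Theorem theorem3 (R : realType) (k : nat) :
  (forall (P : probability (R * R)%type R) (p : R -> R),
      type_distribution P -> kstep_scheme k p -> tstar_exists p ->
      (Rev P p <= k%:R%:E * opt_fixed_rev P)%E) /\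
  ((0 < k)%N -> forall delta : R, 0 < delta ->
      exists (P : probability (R * R)%type R) (p : R -> R),
        [/\ type_distribution P, kstep_scheme k p, tstar_exists p,
            (0 < opt_fixed_rev P)%E &
            ((k%:R - delta)%:E * opt_fixed_rev P <= Rev P p)%E]).
Proof.
split; first by move=> P p tP ks _; exact: part1.
move=> k0 d d0.
pose M : R := 2 * k%:R / d + 2.
have a0 : 0 <= 2 * k%:R / d by apply: divr_ge0; [apply: mulr_ge0; [by [] | exact: ler0n] | exact: ltW].
have M2 : 2 <= M by rewrite /M lerDr.
have M1 : 1 <= M by apply: le_trans M2; rewrite ler1n.
have M0' : 0 < M by apply: lt_le_trans M1.
have M0 : 0 <= M := ltW M0'.
exists (@PP R M M0 k), (@pp R M k); split.
- exact: typ_PP.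
- exact: kstep_pp.
- exact: tstar_ex.
- exact: opt_pos.
have Rev0 : (0 <= Rev (@PP R M M0 k) (@pp R M k))%E.
  by apply: integral_ge0 => x _; rewrite lee_fin pay_ge0.
have opt0 : (0 <= opt_fixed_rev (@PP R M M0 k))%E by apply: ltW; exact: opt_pos.
have [kd|kd] := leP (k%:R - d) 0.
  apply: le_trans Rev0; apply: mule_le0_ge0 => //; by rewrite lee_fin.
apply: (le_trans (lee_wpmul2l _ (@opt_le R M M0 k M2 k0))); first by rewrite lee_fin ltW.
apply: le_trans (@Rev_ge R M M0 k M2 k0); rewrite -EFinM lee_fin.
have S0 := @SS_gt0 R M k M0' k0.
have D0 : 0 < M - 1 by rewrite subr_gt0 (lt_le_trans _ M2) // ltr1n.
rewrite mulrA ler_pdivrMr ?mulr_gt0 //.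
have -> : k%:R / SS R M k * ((M - 1) * SS R M k) = k%:R * (M - 1).
  by field; exact: lt0r_neq0.
have dM : d * M = 2 * k%:R + 2 * d by rewrite /M; field; exact: lt0r_neq0.
nra.
Qed.
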